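(* Let $G$ be a group endowed with an explicit solution to the conjugacy problem and with an algorithm which, for every $a\in G$, computes a finite generating set of the centralizer $C_G(a)$. Let $H<G$ be a subgroup satisfying Condition PC, witnessed by a triple $(K,K',\phi)$ where $\phi$ is computable, $K$ has a solution to the membership problem, and the finite subgroup $K'$ is given by the list of its elements. Then $H$ has an explicit solution to the conjugacy problem: there is an algorithm which, given $a,b\in H$, decides whether there exists $h'\in H$ with $b=(h')^{-1}ah'$ and, if so, outputs such an $h'$.
   Context: An explicit solution to the conjugacy problem in a group $G$ is an algorithm which, given $a,b\in G$, decides whether there is $c\in G$ with $a=c^{-1}bc$ and, if so, produces such a $c$. The centralizer $C_G(a)$ is the set of elements of $G$ commuting with $a$ (assumed finitely generated). A group $K$ has a solution to the membership problem if there is an algorithm which, given a finitely generated subgroup $L<K$ (by a finite generating set) and $g\in K$, decides whether $g\in L$. A subgroup $H<G$ satisfies Condition PC if there exist a group $K$, a subgroup $K'<K$ and a homomorphism $\phi:G\to K$ with $H=\phi^{-1}(K')$, such that $K$ has a solution to the membership problem and $K'$ is finite. *)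

(* Defs.v *)
(* Computability is modelled explicitly by general
   (mu-)recursive programs acting on natural-number codes, so that
   "there is an algorithm" cannot be trivialised by classical choice. *)
From Stdlib Require Import List Arith.
Import ListNotations.

Inductive prog : Type :=
| Zero : prog
| Succ : prog
| Proj : nat -> prog
| Comp : prog -> list prog -> prog
| Prec : prog -> prog -> prog
| Mu   : prog -> prog.

Inductive eval : prog -> list nat -> nat -> Prop :=
| eZero xs : eval Zero xs 0
| eSucc x xs : eval Succ (x :: xs) (S x)
| eProj i xs : eval (Proj i) xs (nth i xs 0)
| eComp f gs xs ys y : evals gs xs ys -> eval f ys y -> eval (Comp f gs) xs y
| ePrec0 g h xs y : eval g xs y -> eval (Prec g h) (0 :: xs) y
| ePrecS g h n xs r y :
    eval (Prec g h) (n :: xs) r -> eval h (n :: r :: xs) y ->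
    eval (Prec g h) (S n :: xs) y
| eMu f xs n :
    eval f (n :: xs) 0 ->
    (forall m, m < n -> exists k, eval f (m :: xs) (S k)) ->
    eval (Mu f) xs n
with evals : list prog -> list nat -> list nat -> Prop :=
| esNil xs : evals nil xs nil
| esCons g gs xs y ys : eval g xs y -> evals gs xs ys -> evals (g :: gs) xs (y :: ys).

Definition cpair (x y : nat) : nat := (x + y) * (x + y + 1) / 2 + y.
Fixpoint code_list (l : list nat) : nat :=
  match l with
  | nil => 0
  | x :: l' => S (cpair x (code_list l'))
  end.

Record group := Group {
  car :> Type;
  mul : car -> car -> car;
  inv : car -> car;
  one : car;
  mulA : forall x y z, mul x (mul y z) = mul (mul x y) z;
  mul1g : forall x, mul one x = x;
  mulVg : forall x, mul (inv x) x = one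
}.
Arguments mul {g}. Arguments inv {g}. Arguments one {g}.

Definition is_subgroup (G : group) (S : G -> Prop) : Prop :=
  S one /\ (forall x y, S x -> S y -> S (mul x y)) /\ (forall x, S x -> S (inv x)).

Definition is_hom (G K : group) (f : G -> K) : Prop :=
  forall x y, f (mul x y) = mul (f x) (f y).

Inductive generated (G : group) (l : list G) : G -> Prop :=
| gen_in x : In x l -> generated G l x
| gen_one : generated G l one
| gen_mul x y : generated G l x -> generated G l y -> generated G l (mul x y)
| gen_inv x : generated G l x -> generated G l (inv x).

Definition centralizer (G : group) (a : G) : G -> Prop :=
  fun g => mul g a = mul a g.

Definition explicit_group (G : group) (dec : nat -> G) : Prop :=
  (forall g : G, exists c, dec c = g) /\
  (exists p, forall x y, exists r, eval p [x; y] r /\ dec r = mul (dec x) (dec y)) /\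
  (exists p, forall x, exists r, eval p [x] r /\ dec r = inv (dec x)).

(** explicit solution to the conjugacy problem in G (convention of the
    context: find c with a = c^-1 b c); output 0 = "no", S c = "yes, c" *)
Definition conj_solution_G (G : group) (dec : nat -> G) : Prop :=
  exists p, forall x y, exists r, eval p [x; y] r /\
    ((r = 0 /\ ~ exists c : G, dec x = mul (inv c) (mul (dec y) c)) \/
     (exists c, r = S c /\ dec x = mul (inv (dec c)) (mul (dec y) (dec c)))).

(** explicit solution to the conjugacy problem in a subgroup H (convention
    of the theorem: given a, b in H find h' in H with b = h'^-1 a h') *)
Definition conj_solution_sub (G : group) (dec : nat -> G) (H : G -> Prop) : Prop :=
  exists p, forall x y, H (dec x) -> H (dec y) -> exists r, eval p [x; y] r /\
    ((r = 0 /\ ~ exists h : G, H h /\ dec y = mul (inv h) (mul (dec x) h)) \/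
     (exists c, r = S c /\ H (dec c) /\
        dec y = mul (inv (dec c)) (mul (dec x) (dec c)))).

Definition centralizer_algorithm (G : group) (dec : nat -> G) : Prop :=
  exists p, forall x, exists r, eval p [x] r /\
    exists l : list nat, r = code_list l /\
      (forall g, generated G (map dec l) g <-> centralizer G (dec x) g).

Definition membership_solution (K : group) (dec : nat -> K) : Prop :=
  exists p, forall (l : list nat) (g : nat),
    (generated K (map dec l) (dec g) -> eval p [code_list l; g] 1) /\
    (~ generated K (map dec l) (dec g) -> eval p [code_list l; g] 0).

Definition computable_map (G K : group) (decG : nat -> G) (decK : nat -> K)
  (f : G -> K) : Prop :=
  exists p, forall x, exists r, eval p [x] r /\ decK r = f (decG x).

(* Main.v *)
Require Import Defs.
From Stdlib Require Import List Arith Lia.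
Import ListNotations.

Definition comp (p : prog) (F : list nat -> nat) := forall xs, eval p xs (F xs).
Definition comp1 (p : prog) (F : nat -> nat) := forall a, eval p [a] (F a).
Definition comp2 (p : prog) (F : nat -> nat -> nat) := forall a b, eval p [a;b] (F a b).

Lemma ev_eq p xs y z : eval p xs y -> y = z -> eval p xs z.
Proof. intros; subst; auto. Qed.
Lemma comp_ext p F F' : comp p F -> (forall xs, F xs = F' xs) -> comp p F'.
Proof. intros H E xs; rewrite <- E; apply H. Qed.

Lemma c_zero : comp Zero (fun _ => 0). Proof. intro; constructor. Qed.
Lemma c_proj i : comp (Proj i) (fun xs => nth i xs 0). Proof. intro; constructor. Qed.
Lemma c_succ : comp1 Succ S. Proof. intro; constructor. Qed.
Lemma c_C1 f F g G : comp1 f F -> comp g G -> comp (Comp f [g]) (fun xs => F (G xs)).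
Proof. intros Hf Hg xs. econstructor. constructor. apply Hg. constructor. apply Hf. Qed.
Lemma c_C2 f F g1 G1 g2 G2 : comp2 f F -> comp g1 G1 -> comp g2 G2 ->
  comp (Comp f [g1;g2]) (fun xs => F (G1 xs) (G2 xs)).
Proof. intros Hf H1 H2 xs. econstructor. constructor. apply H1. constructor. apply H2. constructor. apply Hf. Qed.

Fixpoint precF (G H : list nat -> nat) (n : nat) (xs : list nat) : nat :=
  match n with 0 => G xs | S n' => H (n' :: precF G H n' xs :: xs) end.
Lemma e_prec g G h H : comp g G -> comp h H -> forall n xs, eval (Prec g h) (n :: xs) (precF G H n xs).
Proof. intros Hg Hh n xs; induction n; simpl. constructor; apply Hg. econstructor; [exact IHn| apply Hh]. Qed.

Lemma e_mu f F ys n : comp f F -> F (n :: ys) = 0 -> (forall m, m < n -> F (m :: ys) <> 0) ->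
  eval (Mu f) ys n.
Proof.
  intros Hf H0 Hm. constructor. rewrite <- H0; apply Hf.
  intros m Hlt. exists (pred (F (m :: ys))). apply (ev_eq _ _ _ _ (Hf _)).
  specialize (Hm m Hlt). lia.
Qed.

Fixpoint constP n := match n with 0 => Zero | S n => Comp Succ [constP n] end.
Lemma c_const n : comp (constP n) (fun _ => n).
Proof. induction n; simpl. apply c_zero. apply (c_C1 _ _ _ _ c_succ IHn). Qed.

Definition ADD := Prec (Proj 0) (Comp Succ [Proj 1]).
Lemma c_ADD : comp2 ADD Nat.add.
Proof.
  intros a b. eapply ev_eq. apply e_prec. apply c_proj. apply (c_C1 _ _ _ _ c_succ (c_proj 1)).
  induction a; simpl in *; auto.
Qed.
Definition MUL := Prec Zero (Comp ADD [Proj 1; Proj 2]).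
Lemma c_MUL : comp2 MUL Nat.mul.
Proof.
  intros a b. eapply ev_eq. apply e_prec. apply c_zero. apply (c_C2 _ _ _ _ _ _ c_ADD (c_proj 1) (c_proj 2)).
  induction a; simpl in *; auto. rewrite IHa; lia.
Qed.
Definition PREDp := Prec Zero (Proj 0).
Lemma c_PRED : comp1 PREDp pred.
Proof. intros a. eapply ev_eq. apply e_prec. apply c_zero. apply c_proj. destruct a; reflexivity. Qed.
Definition SUBr := Prec (Proj 0) (Comp PREDp [Proj 1]).
Lemma c_SUBr : comp2 SUBr (fun b a => a - b).
Proof.
  intros b a. eapply ev_eq. apply e_prec. apply c_proj. apply (c_C1 _ _ _ _ c_PRED (c_proj 1)).
  induction b; simpl in *. lia. rewrite IHb; lia.
Qed.

Definition ADDp p q := Comp ADD [p;q].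
Definition MULp p q := Comp MUL [p;q].
Definition SUBp p q := Comp SUBr [q;p].
Definition PREDP p := Comp PREDp [p].
Definition SUCCP p := Comp Succ [p].
Definition NSGp p := SUBp (constP 1) p.
Definition SGp p := NSGp (NSGp p).
Lemma c_ADDp p P q Q : comp p P -> comp q Q -> comp (ADDp p q) (fun xs => P xs + Q xs).
Proof. intros; apply (c_C2 _ _ _ _ _ _ c_ADD); auto. Qed.
Lemma c_MULp p P q Q : comp p P -> comp q Q -> comp (MULp p q) (fun xs => P xs * Q xs).
Proof. intros; apply (c_C2 _ _ _ _ _ _ c_MUL); auto. Qed.
Lemma c_SUBp p P q Q : comp p P -> comp q Q -> comp (SUBp p q) (fun xs => P xs - Q xs).
Proof. intros; apply (c_C2 _ _ _ _ _ _ c_SUBr); auto. Qed.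
Lemma c_PREDP p P : comp p P -> comp (PREDP p) (fun xs => pred (P xs)).
Proof. intros; apply (c_C1 _ _ _ _ c_PRED); auto. Qed.
Lemma c_SUCCP p P : comp p P -> comp (SUCCP p) (fun xs => S (P xs)).
Proof. intros; apply (c_C1 _ _ _ _ c_succ); auto. Qed.
Lemma c_NSGp p P : comp p P -> comp (NSGp p) (fun xs => 1 - P xs).
Proof. intros; apply c_SUBp; auto. apply c_const. Qed.
Lemma c_SGp p P : comp p P -> comp (SGp p) (fun xs => 1 - (1 - P xs)).
Proof. intros; repeat apply c_NSGp; auto. Qed.

Fixpoint T n := match n with 0 => 0 | S n => T n + S n end.
Definition TRI := Prec Zero (Comp ADD [Proj 1; Comp Succ [Proj 0]]).
Lemma c_TRI : comp1 TRI T.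
Proof.
  intros a. eapply ev_eq. apply e_prec. apply c_zero.
  apply (c_C2 _ _ _ _ _ _ c_ADD (c_proj 1) (c_C1 _ _ _ _ c_succ (c_proj 0))).
  induction a; simpl in *; auto.
Qed.
Definition TRIP p := Comp TRI [p].
Lemma c_TRIP p P : comp p P -> comp (TRIP p) (fun xs => T (P xs)).
Proof. intros; apply (c_C1 _ _ _ _ c_TRI); auto. Qed.

Lemma T2 n : 2 * T n = n * (n + 1).
Proof. induction n; simpl T; nia. Qed.
Lemma cpair_eq x y : cpair x y = T (x + y) + y.
Proof.
  unfold cpair. f_equal. rewrite <- T2. rewrite Nat.mul_comm. apply Nat.div_mul. lia.
Qed.
Definition CPp p q := ADDp (TRIP (ADDp p q)) q.
Lemma c_CPp p P q Q : comp p P -> comp q Q -> comp (CPp p q) (fun xs => cpair (P xs) (Q xs)).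
Proof.
  intros. eapply comp_ext. apply c_ADDp; [apply c_TRIP, c_ADDp|]; eauto.
  intros; simpl; rewrite cpair_eq; reflexivity.
Qed.

Lemma T_mono i j : i <= j -> T i <= T j.
Proof. induction 1; simpl; lia. Qed.

Fixpoint ss (m : nat) : nat :=
  match m with 0 => 0 | S m' => if Nat.ltb (S m') (T (S (ss m'))) then ss m' else S (ss m') end.
Lemma ss_spec m : T (ss m) <= m < T (S (ss m)).
Proof.
  induction m; simpl. lia.
  destruct (Nat.ltb_spec (S m) (T (ss m) + S (ss m))); simpl in *; lia.
Qed.
Lemma ss_uniq s m : T s <= m < T (S s) -> ss m = s.
Proof.
  intros Hs. pose proof (ss_spec m). destruct (Nat.lt_total (ss m) s) as [Hl|[He|Hl]]; auto.
  - apply T_mono in Hl. simpl in *; lia.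
  - apply T_mono in Hl. simpl in *; lia.
Qed.

Definition fS := SUBp (SUCCP (Proj 1)) (TRIP (SUCCP (Proj 0))).
Definition SSp p := Comp (Mu fS) [p].
Lemma c_SSp p P : comp p P -> comp (SSp p) (fun xs => ss (P xs)).
Proof.
  intros Hp xs. econstructor. constructor. apply Hp. constructor.
  assert (Hf : comp fS (fun l => S (nth 1 l 0) - T (S (nth 0 l 0)))).
  { apply c_SUBp. apply c_SUCCP, c_proj. apply c_TRIP, c_SUCCP, c_proj. }
  apply (e_mu _ _ _ _ Hf); cbn [nth].
  - pose proof (ss_spec (P xs)). lia.
  - intros m Hm. pose proof (ss_spec (P xs)). apply T_mono in Hm. lia.
Qed.

Definition un2 m := m - T (ss m).
Definition un1 m := ss m - un2 m.
Lemma un_cpair x y : un1 (cpair x y) = x /\ un2 (cpair x y) = y.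
Proof.
  rewrite cpair_eq. assert (E : ss (T (x + y) + y) = x + y).
  { apply ss_uniq. simpl; lia. }
  unfold un1, un2; rewrite E; lia.
Qed.
Definition UN2p p := SUBp p (TRIP (SSp p)).
Definition UN1p p := SUBp (SSp p) (UN2p p).
Lemma c_UN2p p P : comp p P -> comp (UN2p p) (fun xs => un2 (P xs)).
Proof. intros; apply c_SUBp; auto. apply c_TRIP, c_SSp; auto. Qed.
Lemma c_UN1p p P : comp p P -> comp (UN1p p) (fun xs => un1 (P xs)).
Proof. intros; apply c_SUBp. apply c_SSp; auto. apply c_UN2p; auto. Qed.

Definition hdc c := un1 (pred c).
Definition tlc c := un2 (pred c).
Definition HDp p := UN1p (PREDP p).
Definition TLp p := UN2p (PREDP p).
Lemma c_HDp p P : comp p P -> comp (HDp p) (fun xs => hdc (P xs)).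
Proof. intros; apply c_UN1p, c_PREDP; auto. Qed.
Lemma c_TLp p P : comp p P -> comp (TLp p) (fun xs => tlc (P xs)).
Proof. intros; apply c_UN2p, c_PREDP; auto. Qed.
Lemma hdc_cons x l : hdc (code_list (x :: l)) = x.
Proof. apply un_cpair. Qed.
Lemma tl_cons x l : tlc (code_list (x :: l)) = code_list l.
Proof. apply un_cpair. Qed.
Lemma tl_0 : tlc 0 = 0.
Proof. reflexivity. Qed.

Fixpoint remf k m := match k with 0 => m | S k => tlc (remf k m) end.
Definition REM := Prec (Proj 0) (TLp (Proj 1)).
Lemma c_REM : comp2 REM remf.
Proof.
  intros k m. eapply ev_eq. apply e_prec. apply c_proj. apply c_TLp, c_proj.
  induction k; simpl in *; try rewrite IHk; auto.
Qed.

Lemma skipn_S_tl {A} k (l : list A) : skipn (S k) l = List.tl (skipn k l).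
Proof. revert l; induction k; intros [|a l]; simpl; auto. rewrite <- IHk; reflexivity. Qed.

Lemma remf_code k l : remf k (code_list l) = code_list (skipn k l).
Proof.
  induction k; cbn [remf]; auto. rewrite IHk, skipn_S_tl.
  destruct (skipn k l); simpl. apply tl_0. apply tl_cons.
Qed.

Definition IFZp c a b := ADDp (MULp (NSGp c) a) (MULp (SGp c) b).
Lemma c_IFZp c C a A b B : comp c C -> comp a A -> comp b B ->
  comp (IFZp c a b) (fun xs => if Nat.eqb (C xs) 0 then A xs else B xs).
Proof.
  intros. eapply comp_ext. apply c_ADDp; apply c_MULp; [apply (c_NSGp _ _ H)| eauto | apply (c_SGp _ _ H) | eauto].
  intros xs; cbv beta. destruct (C xs) as [|n]; simpl; lia.
Qed.

Section Map.
Variable PH : prog.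
Variable phf : nat -> nat.
Hypothesis HPH : comp1 PH phf.

Fixpoint accf k m := match k with 0 => 0 | S k =>
  if Nat.eqb (remf k m) 0 then accf k m else S (cpair (phf (hdc (remf k m))) (accf k m)) end.

Definition REMc := Comp REM [Proj 0; Proj 2].
Definition ACCstep := IFZp REMc (Proj 1) (SUCCP (CPp (Comp PH [HDp REMc]) (Proj 1))).
Definition MAP := Comp (Prec Zero ACCstep) [Proj 0; Proj 0].

Lemma c_MAP : comp1 MAP (fun m => accf m m).
Proof.
  intros m. econstructor. constructor. apply c_proj. constructor. apply c_proj. constructor.
  simpl. eapply ev_eq. eapply e_prec. apply c_zero.
  apply c_IFZp. eapply (c_C2 _ _ _ _ _ _ c_REM); apply c_proj. apply c_proj.
  apply c_SUCCP, c_CPp. eapply (c_C1 _ _ _ _ HPH). apply c_HDp. eapply (c_C2 _ _ _ _ _ _ c_REM); apply c_proj.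
  apply c_proj.
  match goal with |- precF ?G ?H m [m] = _ =>
    assert (E: forall k, precF G H k [m] = accf k m) end.
  { induction k; simpl in *; try rewrite IHk; auto. }
  apply E.
Qed.

Lemma skipn_nil_len {A} k (l : list A) : skipn k l = [] -> length l <= k.
Proof. revert l; induction k; intros [|a l]; simpl; intros; try lia; try discriminate. apply IHk in H; lia. Qed.
Lemma firstn_snoc {A} k (l r : list A) x : skipn k l = x :: r -> firstn (S k) l = firstn k l ++ [x].
Proof. revert l; induction k; intros [|a l] H; try discriminate.
  - inversion H; subst; reflexivity.
  - simpl in H. specialize (IHk l H). rewrite !firstn_cons, IHk. reflexivity. Qed.

Lemma accf_code k l : accf k (code_list l) = code_list (rev (map phf (firstn k l))).
Proof.
  induction k; cbn [accf]. rewrite firstn_O; auto.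
  rewrite remf_code. destruct (skipn k l) eqn:E; cbn [code_list Nat.eqb].
  - rewrite IHk. apply skipn_nil_len in E. rewrite !firstn_all2; auto; lia.
  - replace (hdc (S (cpair n (code_list l0)))) with n by (symmetry; apply (hdc_cons n l0)).
    rewrite IHk, (firstn_snoc _ _ _ _ E), map_app, rev_app_distr. reflexivity.
Qed.

Lemma code_len l : length l <= code_list l.
Proof. induction l; simpl; auto. rewrite cpair_eq. lia. Qed.

Lemma MAP_code l : accf (code_list l) (code_list l) = code_list (rev (map phf l)).
Proof. rewrite accf_code, firstn_all2; auto. apply code_len. Qed.
End Map.

Section Grp.
Variable G : group.
Implicit Types x y z : G.
Lemma mulgV x : mul x (inv x) = one.
Proof.
  assert (Hee : mul (mul x (inv x)) (mul x (inv x)) = mul x (inv x)).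
  { rewrite <- mulA, (mulA _ (inv x) x (inv x)), mulVg, mul1g. reflexivity. }
  set (e := mul x (inv x)) in *.
  transitivity (mul (mul (inv e) e) e). rewrite mulVg, mul1g; reflexivity.
  rewrite <- mulA, Hee, mulVg; reflexivity.
Qed.
Lemma mulg1 x : mul x one = x.
Proof. rewrite <- (mulVg G x), mulA, mulgV, mul1g. reflexivity. Qed.
Lemma inv_uniq x y : mul x y = one -> y = inv x.
Proof. intros H. rewrite <- (mul1g G y), <- (mulVg G x), <- mulA, H, mulg1. reflexivity. Qed.
Lemma invK x : inv (inv x) = x.
Proof. symmetry; apply inv_uniq; apply mulVg. Qed.
Lemma inv1 : inv (one (g:=G)) = one.
Proof. symmetry; apply inv_uniq; apply mul1g. Qed.
Lemma invM x y : inv (mul x y) = mul (inv y) (inv x).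
Proof. symmetry; apply inv_uniq. rewrite <- mulA, (mulA _ y (inv y) (inv x)), mulgV, mul1g, mulgV. reflexivity. Qed.
Lemma mulKg x y : mul (inv x) (mul x y) = y.
Proof. rewrite mulA, mulVg, mul1g; reflexivity. Qed.
Lemma mulVKg x y : mul x (mul (inv x) y) = y.
Proof. rewrite mulA, mulgV, mul1g; reflexivity. Qed.
Lemma mul_cancel_l x y z : mul x y = mul x z -> y = z.
Proof. intros H. rewrite <- (mulKg x y), H, mulKg. reflexivity. Qed.

Lemma conj_comm (z g a : G) : mul z a = mul a z ->
  mul (inv (mul z g)) (mul a (mul z g)) = mul (inv g) (mul a g).
Proof.
  intros Hc. rewrite invM, <- mulA. f_equal.
  rewrite (mulA _ a z g), <- Hc, <- mulA, mulKg. reflexivity.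
Qed.
Lemma conj_eq_comm (h g a : G) : mul (inv h) (mul a h) = mul (inv g) (mul a g) ->
  mul (mul h (inv g)) a = mul a (mul h (inv g)).
Proof.
  intros E.
  assert (E2: mul a h = mul h (mul (inv g) (mul a g))) by (rewrite <- E, mulVKg; reflexivity).
  rewrite (mulA _ a h (inv g)), E2, <- !mulA, mulgV, mulg1. reflexivity.
Qed.

Lemma gen_ext (l1 l2 : list G) : (forall z, In z l1 -> In z l2) -> forall g, generated G l1 g -> generated G l2 g.
Proof. intros Hs g Hg; induction Hg; [apply gen_in; auto| apply gen_one | apply gen_mul | apply gen_inv]; auto. Qed.
Lemma gen_closed (S : G -> Prop) (l : list G) : is_subgroup G S -> (forall z, In z l -> S z) ->
  forall g, generated G l g -> S g.
Proof. intros [H1 [H2 H3]] Hs g Hg; induction Hg; auto. Qed.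
End Grp.

Section Hom.
Variables (G K : group) (phi : G -> K).
Hypothesis hphi : is_hom G K phi.
Lemma phi1 : phi one = one.
Proof. apply (mul_cancel_l K (phi one)). rewrite <- hphi, mul1g, mulg1. reflexivity. Qed.
Lemma phiV x : phi (inv x) = inv (phi x).
Proof. apply inv_uniq. rewrite <- hphi, mulgV, phi1. reflexivity. Qed.
Lemma gen_img l z : generated G l z -> generated K (map phi l) (phi z).
Proof.
  induction 1.
  - apply gen_in, in_map; auto.
  - rewrite phi1; apply gen_one.
  - rewrite hphi; apply gen_mul; auto.
  - rewrite phiV; apply gen_inv; auto.
Qed.
Lemma gen_pre l u : generated K (map phi l) u -> exists z, generated G l z /\ phi z = u.
Proof.
  induction 1.
  - apply in_map_iff in H as [z [E Hz]]. exists z; split; auto. apply gen_in; auto.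
  - exists one; split. apply gen_one. apply phi1.
  - destruct IHgenerated1 as [z1 [A1 B1]], IHgenerated2 as [z2 [A2 B2]].
    exists (mul z1 z2); split. apply gen_mul; auto. rewrite hphi; congruence.
  - destruct IHgenerated as [z [A B]]. exists (inv z); split. apply gen_inv; auto. rewrite phiV; congruence.
Qed.
End Hom.
From Stdlib Require Import Classical IndefiniteDescription.

Lemma choice1 {A C} (P : A -> C -> Prop) : (forall a, exists c, P a c) -> exists f, forall a, P a (f a).
Proof. intros H. exists (fun a => proj1_sig (constructive_indefinite_description _ (H a))).
  intros; apply proj2_sig. Qed.
Lemma choice2 {A B C} (P : A -> B -> C -> Prop) : (forall a b, exists c, P a b c) ->
  exists f, forall a b, P a b (f a b).
Proof. intros H. exists (fun a b => proj1_sig (constructive_indefinite_description _ (H a b))).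
  intros; apply proj2_sig. Qed.

Lemma least_witness (P : nat -> Prop) n : P n -> exists m, P m /\ forall k, k < m -> ~ P k.
Proof.
  pattern n; apply lt_wf_ind; clear n; intros n IH Pn.
  destruct (classic (exists m, m < n /\ P m)) as [[m [Hm Pm]]|Hno].
  - apply (IH m Hm Pm).
  - exists n; split; auto. intros k Hk Pk; apply Hno; eauto.
Qed.

Lemma c_mem pmem (memf : list nat -> nat -> nat)
  (Hm : forall l g, eval pmem [code_list l; g] (memf l g)) q1 L q2 Q :
  comp q1 (fun xs => code_list (L xs)) -> comp q2 Q ->
  comp (Comp pmem [q1;q2]) (fun xs => memf (L xs) (Q xs)).
Proof. intros H1 H2 xs. econstructor. constructor. apply H1. constructor. apply H2. constructor. apply Hm. Qed.

Definition DP pmem pmK (MLP pc0P : prog) (ks : list nat) :=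
  fold_right (fun k acc => ADDp (Comp pmem [MLP; Comp pmK [constP k; pc0P]]) acc) Zero ks.
Lemma c_DP pmem memf (Hm : forall l g, eval pmem [code_list l; g] (memf l g)) pmK mkf
  (HmK : comp2 pmK mkf) MLP L pc0P Q :
  comp MLP (fun xs => code_list (L xs)) -> comp pc0P Q -> forall ks,
  comp (DP pmem pmK MLP pc0P ks) (fun xs => list_sum (map (fun k => memf (L xs) (mkf k (Q xs))) ks)).
Proof.
  intros H1 H2 ks; induction ks; simpl. apply c_zero.
  apply c_ADDp; auto. apply (c_mem _ _ Hm _ _ _ _ H1). eapply (c_C2 _ _ _ _ _ _ HmK). apply c_const. auto.
Qed.

Lemma list_sum_nz (f : nat -> nat) ks : list_sum (map f ks) <> 0 <-> exists k, In k ks /\ f k <> 0.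
Proof.
  induction ks; simpl. split; [lia| intros [k [[] _]]].
  split.
  - intros H. destruct (Nat.eq_dec (f a) 0). destruct IHks as [I _]. destruct I as [k [A B]]. lia.
    exists k; auto. exists a; auto.
  - intros [k [[E|I] B]]. subst; lia. assert (list_sum (map f ks) <> 0) by (apply IHks; eauto). lia.
Qed.

Definition FLP pcj pce pph piK pmK pmem (lK' : list nat) :=
  MULp (SGp (Comp pcj [Proj 1; Proj 0]))
       (SGp (DP pmem pmK (Comp (MAP pph) [Comp pce [Proj 0]])
                 (Comp piK [Comp pph [PREDP (Comp pcj [Proj 1; Proj 0])]]) lK')).
Definition fBP pmG piG pcj pmem pph e1 cK' :=
  MULp (Proj 1) (ADDp
    (NSGp (Comp pcj [Comp pmG [Proj 3; Comp piG [Comp pmG [Comp piG [Proj 0]; Comp pmG [Proj 2; Proj 0]]]]; constP e1]))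
    (NSGp (Comp pmem [constP cK'; Comp pph [Proj 0]]))).
Definition TOP FL fB := Comp (MULp (Proj 0) (SUCCP (Comp (Mu fB) [Proj 0; Proj 1; Proj 2]))) [FL; Proj 0; Proj 1].

Theorem mainTheorem4
  (G : group) (decG : nat -> G)
  (hG : explicit_group G decG)
  (hconjG : conj_solution_G G decG)
  (hcent : centralizer_algorithm G decG)
  (H : G -> Prop) (hH : is_subgroup G H)
  (K : group) (decK : nat -> K)
  (hK : explicit_group K decK)
  (hmemK : membership_solution K decK)
  (K' : K -> Prop) (hK' : is_subgroup K K')
  (lK' : list nat) (hlK' : forall k : K, K' k <-> exists c, In c lK' /\ decK c = k)
  (phi : G -> K) (hphi : is_hom G K phi)
  (hphic : computable_map G K decG decK phi)
  (hHphi : forall g : G, H g <-> K' (phi g)) :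
  conj_solution_sub G decG H.
Proof.
  destruct hG as [surjG [[pmG HmG] [piG HiG]]].
  destruct hK as [surjK [[pmK HmK] [piK HiK]]].
  destruct hconjG as [pcj Hcj].
  destruct hcent as [pce Hce].
  destruct hmemK as [pmem Hmem].
  destruct hphic as [pph Hph].
  destruct (choice2 _ HmG) as [mgf Hmgf].
  destruct (choice1 _ HiG) as [igf Higf].
  destruct (choice2 _ HmK) as [mkf Hmkf].
  destruct (choice1 _ HiK) as [ikf Hikf].
  destruct (choice1 _ Hph) as [phf Hphf].
  destruct (choice2 _ Hcj) as [cjf Hcjf].
  assert (Hce' : forall x, exists l, eval pce [x] (code_list l) /\
     (forall g, generated G (map decG l) g <-> centralizer G (decG x) g)).
  { intros x. destruct (Hce x) as [r [Er [l [-> Hl]]]]. eauto. }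
  destruct (choice1 _ Hce') as [cel Hcel].
  assert (Hmem' : forall (l : list nat) g, exists r, eval pmem [code_list l; g] r /\
     (generated K (map decK l) (decK g) -> r = 1) /\ (~ generated K (map decK l) (decK g) -> r = 0)).
  { intros l g. destruct (Hmem l g) as [A B].
    destruct (classic (generated K (map decK l) (decK g))) as [Hg|Hg].
    - exists 1; repeat split; auto. intros; contradiction.
    - exists 0; repeat split; auto. intros; contradiction. }
  destruct (choice2 _ Hmem') as [memf Hmemf].
  destruct (surjG one) as [e1 He1].
  assert (CmG : comp2 pmG mgf) by (intros a b; apply Hmgf).
  assert (CiG : comp1 piG igf) by (intros a; apply Higf).
  assert (CmK : comp2 pmK mkf) by (intros a b; apply Hmkf).
  assert (CiK : comp1 piK ikf) by (intros a; apply Hikf).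
  assert (Cph : comp1 pph phf) by (intros a; apply Hphf).
  assert (Ccj : comp2 pcj cjf) by (intros a b; apply Hcjf).
  assert (Cce : comp1 pce (fun a => code_list (cel a))) by (intros a; apply Hcel).
  assert (Cmem : forall l g, eval pmem [code_list l; g] (memf l g)) by (intros; apply Hmemf).
  set (Lc := fun x => rev (map phf (cel x))).
  set (Dv := fun x y => list_sum (map (fun k => memf (Lc x) (mkf k (ikf (phf (pred (cjf y x)))))) lK')).
  set (Fl := fun x y => (1 - (1 - cjf y x)) * (1 - (1 - Dv x y))).
  assert (CFL : comp (FLP pcj pce pph piK pmK pmem lK') (fun xs => Fl (nth 0 xs 0) (nth 1 xs 0))).
  { assert (CML : comp (Comp (MAP pph) [Comp pce [Proj 0]]) (fun xs => code_list (Lc (nth 0 xs 0)))).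
    { eapply comp_ext. eapply (c_C1 _ _ _ _ (c_MAP _ _ Cph)). eapply (c_C1 _ _ _ _ Cce). apply c_proj.
      intros xs; simpl. apply MAP_code. }
    eapply comp_ext. apply c_MULp. apply c_SGp. eapply (c_C2 _ _ _ _ _ _ Ccj); apply c_proj.
    apply c_SGp. eapply (c_DP _ _ Cmem _ _ CmK _ _ _ _ CML).
    eapply (c_C1 _ _ _ _ CiK). eapply (c_C1 _ _ _ _ Cph). apply c_PREDP.
    eapply (c_C2 _ _ _ _ _ _ Ccj); apply c_proj.
    intros xs; reflexivity. }
  set (fBv := fun xs : list nat => nth 1 xs 0 * ((1 - cjf (mgf (nth 3 xs 0) (igf (mgf (igf (nth 0 xs 0)) (mgf (nth 2 xs 0) (nth 0 xs 0))))) e1) + (1 - memf lK' (phf (nth 0 xs 0))))).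
  assert (CfB : comp (fBP pmG piG pcj pmem pph e1 (code_list lK')) fBv).
  { eapply comp_ext. apply c_MULp. apply c_proj. apply c_ADDp; apply c_NSGp.
    eapply (c_C2 _ _ _ _ _ _ Ccj). eapply (c_C2 _ _ _ _ _ _ CmG). apply c_proj.
    eapply (c_C1 _ _ _ _ CiG). eapply (c_C2 _ _ _ _ _ _ CmG). eapply (c_C1 _ _ _ _ CiG). apply c_proj.
    eapply (c_C2 _ _ _ _ _ _ CmG); apply c_proj. apply c_const.
    apply (c_mem _ _ Cmem _ (fun _ => lK')). apply c_const. eapply (c_C1 _ _ _ _ Cph). apply c_proj.
    intros xs; reflexivity. }
  exists (TOP (FLP pcj pce pph piK pmK pmem lK') (fBP pmG piG pcj pmem pph e1 (code_list lK'))).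
  intros x y Hx Hy.

  set (a := decG x) in *. set (b := decG y) in *.
  assert (F1 : forall g, generated K (map decK lK') g <-> K' g).
  { intros g; split.
    - apply gen_closed; auto. intros z Hz. apply in_map_iff in Hz as [c [E Hc]]. apply hlK'; eauto.
    - intros Hg. apply hlK' in Hg as [c [Hc E]]. subst. apply gen_in, in_map; auto. }
  assert (F2 : forall c, 1 - memf lK' (phf c) = 0 <-> H (decG c)).
  { intros c. rewrite hHphi, <- (proj2 (Hphf c)), <- F1.
    destruct (Hmemf lK' (phf c)) as [_ [A B]]. split.
    - intros E. destruct (classic (generated K (map decK lK') (decK (phf c)))) as [Hg|Hg]; auto.
      rewrite (B Hg) in E; discriminate.
    - intros Hg; rewrite (A Hg); reflexivity. }
  assert (F3 : forall c, 1 - cjf (mgf y (igf (mgf (igf c) (mgf x c)))) e1 = 0 <->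
     b = mul (inv (decG c)) (mul a (decG c))).
  { intros c. set (et := mgf y (igf (mgf (igf c) (mgf x c)))).
    assert (Det : decG et = mul b (inv (mul (inv (decG c)) (mul a (decG c))))).
    { unfold et. rewrite (proj2 (Hmgf _ _)), (proj2 (Higf _)), (proj2 (Hmgf _ _)), (proj2 (Higf _)), (proj2 (Hmgf _ _)).
      reflexivity. }
    set (w := mul (inv (decG c)) (mul a (decG c))) in *.
    destruct (Hcjf et e1) as [_ [[Er Hn]|[c' [Er Hc']]]]; rewrite Er; split; intros E; try discriminate.
    - exfalso; apply Hn. exists one. rewrite He1, Det, E, mulgV, inv1, !mul1g. reflexivity.
    - rewrite He1, mul1g, mulVg, Det in Hc'. apply inv_uniq in Hc'. rewrite <- (invK _ b), <- Hc', invK. reflexivity.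
    - reflexivity. }
  assert (Lgen : forall u, generated K (map decK (Lc x)) u <-> generated K (map phi (map decG (cel x))) u).
  { assert (EM : map decK (map phf (cel x)) = map phi (map decG (cel x))).
    { rewrite !map_map. apply map_ext. intros; apply Hphf. }
    intros u; split; apply gen_ext; intros z Hz; unfold Lc in *.
    - rewrite map_rev, <- in_rev, EM in Hz; auto.
    - rewrite map_rev, <- in_rev, EM; auto. }
  assert (Claim : cjf y x <> 0 /\ Dv x y <> 0 <-> exists h, H h /\ b = mul (inv h) (mul a h)).
  { split.
    - intros [N1 N2]. destruct (Hcjf y x) as [_ [[Er _]|[c0 [Er Eb]]]]; [contradiction|].
      unfold Dv in N2. rewrite Er in N2. simpl pred in N2.
      apply list_sum_nz in N2 as [k [Hk Nk]].
      set (q := ikf (phf c0)) in *.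
      destruct (Hmemf (Lc x) (mkf k q)) as [_ [_ B]].
      destruct (classic (generated K (map decK (Lc x)) (decK (mkf k q)))) as [Hg|Hg]; [|rewrite (B Hg) in Nk; lia].
      apply Lgen in Hg. apply (gen_pre _ _ _ hphi) in Hg as [z [Hz Ez]].
      apply Hcel in Hz. unfold centralizer in Hz.
      exists (mul z (decG c0)). split.
      + apply hHphi. rewrite hphi, Ez. unfold q. rewrite (proj2 (Hmkf _ _)), (proj2 (Hikf _)), (proj2 (Hphf _)).
        rewrite <- mulA, mulVg, mulg1. apply hlK'; eauto.
      + rewrite conj_comm; auto.
    - intros [h [Hh Eb]]. destruct (Hcjf y x) as [_ [[Er Hn]|[c0 [Er Eb0]]]].
      { exfalso; apply Hn; eauto. }
      rewrite Er. split; [discriminate|]. unfold Dv. rewrite Er. simpl pred.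
      apply list_sum_nz. pose proof Hh as Hh'. apply hHphi, hlK' in Hh' as [k [Hk Ek]].
      exists k; split; auto.
      destruct (Hmemf (Lc x) (mkf k (ikf (phf c0)))) as [_ [A _]]. rewrite A; [lia|].
      apply Lgen. rewrite (proj2 (Hmkf _ _)), (proj2 (Hikf _)), (proj2 (Hphf _)), Ek, <- phiV, <- hphi; auto.
      apply gen_img; auto. apply Hcel. unfold centralizer.
      apply conj_eq_comm. transitivity b; [symmetry; exact Eb| exact Eb0]. }
  set (fl := Fl x y).
  assert (Hfl : fl = 0 \/ (fl = 1 /\ cjf y x <> 0 /\ Dv x y <> 0)).
  { unfold fl, Fl. destruct (cjf y x); destruct (Dv x y); simpl; auto; right; repeat split; lia. }
  assert (Wit : exists n, fBv (n :: [fl; x; y]) = 0).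
  { destruct Hfl as [E|[E [N1 N2]]].
    - exists 0. unfold fBv. simpl. rewrite E. reflexivity.
    - destruct (proj1 Claim (conj N1 N2)) as [h [Hh Eb]]. destruct (surjG h) as [c Hc].
      exists c. unfold fBv. simpl nth. subst h.
      rewrite (proj2 (F2 c) Hh), (proj2 (F3 c) Eb). lia. }
  destruct Wit as [n0 Hn0]. destruct (least_witness (fun m => fBv (m :: [fl; x; y]) = 0) n0 Hn0) as [n [Hn Hmin]].
  exists (fl * S n). split.
  { assert (HM : eval (Mu (fBP pmG piG pcj pmem pph e1 (code_list lK'))) [fl; x; y] n).
    { apply (e_mu _ _ _ n CfB); auto. }
    unfold TOP. apply (eComp _ _ _ [fl; x; y]).
    { constructor. apply CFL. constructor. apply c_proj. constructor. apply c_proj. constructor. }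
    unfold MULp. apply (eComp _ _ _ [fl; S n]).
    { constructor. apply c_proj. constructor. 2: constructor.
      apply (eComp _ _ _ [n]). constructor. 2: constructor. apply (eComp _ _ _ [fl; x; y]).
      constructor. apply c_proj. constructor. apply c_proj. constructor. apply c_proj. constructor.
      exact HM. constructor. }
    apply c_MUL. }
  destruct Hfl as [E|[E [N1 N2]]].
  - left. rewrite E. split; auto. intros Ex. apply Claim in Ex as [N1 N2].
    unfold fl, Fl in E. destruct (cjf y x), (Dv x y); simpl in E; lia.
  - right. exists n. rewrite E. split. lia.
    unfold fBv in Hn. simpl nth in Hn. rewrite E in Hn.
    split. apply F2; lia. apply F3; lia.
Qed.
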